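(* Let $m>l\ge1$ be integers and let $Q=(q_{ij})$ be an $m\times l$ real matrix such that for each $j=1,\dots,l$, $q_{jj}>\sum_{i\ne j,\,1\le i\le m}|q_{ij}|$. Let $\mathcal A$ be the set of all $l\times l$ submatrices of $Q$ (obtained by selecting $l$ of its $m$ rows), and let $S_1\in\mathcal A$ be the matrix formed by the first $l$ rows of $Q$. Then $\det S_1=\max_{S\in\mathcal A}|\det S|$. *)

(* Defs.v *)
From mathcomp Require Import all_boot all_order all_algebra.
Set Implicit Arguments. Unset Strict Implicit. Unset Printing Implicit Defensive.
Import Order.TTheory GRing.Theory Num.Theory.
Local Open Scope ring_scope.

(* The l x l submatrix of Q : 'M_(m,l) formed by the rows selected by f,
   where f : 'I_l -> 'I_m is strictly increasing (a choice of l of the m rows,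
   kept in their original order). *)
Definition row_selection (m l : nat) (f : 'I_l -> 'I_m) : Prop :=
  forall i j : 'I_l, (i < j)%N -> (f i < f j)%N.

Definition submx_rows (R : Type) (m l : nat) (Q : 'M[R]_(m, l)) (f : 'I_l -> 'I_m)
  : 'M[R]_l := rowsub f Q.

Definition first_rows (R : Type) (m l : nat) (hlm : (l <= m)%N) (Q : 'M[R]_(m, l))
  : 'M[R]_l := rowsub (widen_ord hlm) Q.

(* Main.v *)
Require Import Defs.
From mathcomp Require Import all_boot all_order all_algebra.
From mathcomp Require Import ring lra.
Import Order.TTheory GRing.Theory Num.Theory.
Local Open Scope ring_scope.

Section Aux.
Variable R : realFieldType.

Lemma sum_lift_cond (n : nat) (F : 'I_n.+1 -> R) (P : pred 'I_n.+1) :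
  \sum_(i < n.+1 | P i) F i =
  (if P ord0 then F ord0 else 0) + \sum_(i < n | P (lift ord0 i)) F (lift ord0 i).
Proof. by rewrite big_mkcond big_ord_recl /= -big_mkcond. Qed.

Lemma sum_inj_le (n m : nat) (f : 'I_n -> 'I_m) (G : 'I_m -> R) :
  injective f -> (forall i, 0 <= G i) -> \sum_k G (f k) <= \sum_i G i.
Proof.
move=> finj G0.
have -> : \sum_k G (f k) = \sum_(i in f @: [set: 'I_n]) G i.
  by rewrite big_imset /=; [apply: eq_bigl => k; rewrite inE | move=> ? ? _ _; apply: finj].
rewrite [X in _ <= X](bigID (mem (f @: [set: 'I_n]))) /= lerDl.
by apply: sumr_ge0.
Qed.
Lemma aux (q A B x y t s L : R) : 0 < q -> 0 <= x -> t <= y * x ->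
  x + A < s -> y + B < q -> L <= A + B * (x / q) -> L < s - t / q.
Proof.
move=> q0 x0 ht h1 h2 h3.
have xq : 0 <= x / q by apply: divr_ge0 => //; exact: ltW.
have h4 : B * (x / q) <= (q - y) * (x / q) by apply: (ler_wpM2r xq); lra.
have h5 : (q - y) * (x / q) = x - y * x / q by field; rewrite gt_eqF.
have iq : 0 <= q^-1 by rewrite invr_ge0 ltW.
have h6 : t / q <= y * x / q by exact: (ler_wpM2r iq ht).
lra.
Qed.
End Aux.

Lemma core (R : realFieldType) (l : nat) : forall (m : nat) (hlm : (l <= m)%N)
  (Q : 'M[R]_(m, l)),
  (forall j : 'I_l, \sum_(i < m | i != widen_ord hlm j) `|Q i j| < Q (widen_ord hlm j) j) ->
  forall f : 'I_l -> 'I_m, injective f ->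
  `|\det (rowsub f Q)| <= \det (rowsub (widen_ord hlm) Q).
Proof.
elim: l => [|l IH] m hlm Q hdom f finj.
  by rewrite !det_mx00 normr1.
case: m hlm Q hdom f finj => [//|m] hlm Q hdom f finj.
have hlm' : (l <= m)%N by [].
pose q := Q ord0 ord0.
have w0 : widen_ord hlm ord0 = ord0 by apply: val_inj.
have hq : \sum_(i < m.+1 | i != ord0) `|Q i ord0| < q by have := hdom ord0; rewrite w0.
have qgt0 : 0 < q.
  by apply: le_lt_trans hq; apply: sumr_ge0 => i _; exact: normr_ge0.
have qn0 : q != 0 by rewrite gt_eqF.
pose Q' : 'M[R]_(m, l) := \matrix_(i, j) (Q (lift ord0 i) (lift ord0 j)
        - Q (lift ord0 i) ord0 * Q ord0 (lift ord0 j) / q).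
pose E : 'M[R]_l.+1 := \matrix_(a, b)
   (if a == b then 1 else if a == ord0 then - (Q ord0 b / q) else 0).
pose P := Q *m E.
have PE0 : forall i, P i ord0 = Q i ord0.
  move=> i; rewrite !mxE (bigD1 ord0) //= big1 ?addr0; first by rewrite mxE eqxx mulr1.
  move=> k hk; rewrite mxE (negbTE hk) mulr0 //.
have PEl : forall i j, P i (lift ord0 j) =
    Q i (lift ord0 j) - Q i ord0 * Q ord0 (lift ord0 j) / q.
  move=> i j; rewrite !mxE (bigD1 (lift ord0 j)) //= (bigD1 ord0) ?neq_lift //=.
  rewrite big1 ?addr0.
    rewrite !mxE eqxx mulr1 (negbTE (neq_lift _ _)) eqxx mulrN mulrA //.
  move=> k /andP [hk1 hk2]; rewrite mxE (negbTE hk1) (negbTE hk2) mulr0 //.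
have detE : \det E = 1.
  rewrite -det_tr det_trig.
    by rewrite big1 // => i _; rewrite !mxE eqxx.
  apply/is_trig_mxP => a b ab; rewrite !mxE.
  have -> : (b == a) = false by apply/negbTE; rewrite neq_ltn ab orbT.
  case: eqP => // hb; move: ab; rewrite hb.
  by [].
have detP : forall g : 'I_l.+1 -> 'I_m.+1, \det (rowsub g P) = \det (rowsub g Q).
  by move=> g; rewrite /P -mul_rowsub_mx det_mulmx detE mulr1.
pose M (g : 'I_l.+1 -> 'I_m.+1) (k : 'I_l.+1) := row' k (col' ord0 (rowsub g P)).
have Mentry : forall g k r c, M g k r c = P (g (lift k r)) (lift ord0 c).
  by move=> g k r c; rewrite !mxE.
have detPexp : forall g, \det (rowsub g P) =
    \sum_k Q (g k) ord0 * ((-1) ^+ k * \det (M g k)).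
  move=> g; rewrite (expand_det_col _ ord0); apply: eq_bigr => k _.
  by rewrite mxE PE0 /cofactor addn0.
have Mzero : forall g k r, g (lift k r) = ord0 -> \det (M g k) = 0.
  move=> g k r hr; rewrite (expand_det_row _ r) big1 // => c _.
  by rewrite Mentry hr PEl mulrAC divff // mul1r subrr mul0r.
have Mrow : forall (g : 'I_l.+1 -> 'I_m.+1) (k : 'I_l.+1) (h : 'I_l -> 'I_m),
    (forall r : 'I_l, g (lift k r) = lift ord0 (h r)) -> M g k = rowsub h Q'.
  move=> g k h hh; apply/matrixP => r c.
  by rewrite Mentry hh PEl !mxE.
have hdom' : forall j : 'I_l, \sum_(i < m | i != widen_ord hlm' j) `|Q' i j|
      < Q' (widen_ord hlm' j) j.
  move=> j; set w := widen_ord hlm' j.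
  set J := lift ord0 j; set W := lift ord0 w.
  have WJ : widen_ord hlm J = W by apply: val_inj.
  have hJ := hdom J; rewrite WJ sum_lift_cond in hJ.
  rewrite (neq_lift ord0 w) in hJ.
  have hJ' : `|Q ord0 J| + \sum_(i < m | i != w) `|Q (lift ord0 i) J| < Q W J.
    by move: hJ; congr (_ + _ < _); apply: eq_bigl => i; rewrite (inj_eq lift_inj).
  move: hq; rewrite sum_lift_cond eqxx /= add0r.
  rewrite (bigD1 w) //= => hq'.
  rewrite mxE.
  apply: (@aux R _ _ _ _ _ _ _ _ qgt0 (normr_ge0 _) _ hJ' hq').
    by rewrite -normrM ler_norm.
  rewrite mulr_suml -big_split /=; apply: ler_sum => i _.
  rewrite mxE; apply: le_trans (ler_normB _ _) _; rewrite lerD2l.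
  by rewrite -mulrA normrM (normrM (Q ord0 J)) normfV (gtr0_norm qgt0).
have D0 : 0 <= \det (rowsub (widen_ord hlm') Q').
  have winj : injective (widen_ord hlm') by move=> a b /(congr1 val) e; exact: val_inj.
  exact: le_trans (normr_ge0 _) (IH _ hlm' Q' hdom' _ winj).
have bound : forall g : 'I_l.+1 -> 'I_m.+1, injective g -> forall k,
    `|\det (M g k)| <= \det (rowsub (widen_ord hlm') Q').
  move=> g ginj k.
  case: (boolP [exists r, g (lift k r) == ord0]).
    by case/existsP => r /eqP hr; rewrite (Mzero _ _ _ hr) normr0.
  move=> hn.
  have hn' : forall r, g (lift k r) != ord0.
    by move=> r; apply: contra hn => /eqP h; apply/existsP; exists r; rewrite h.
  pose h (r : 'I_l) := odflt (widen_ord hlm' r) (unlift ord0 (g (lift k r))).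
  have hh : forall r : 'I_l, g (lift k r) = lift ord0 (h r).
    move=> r; rewrite /h; case: unliftP => [j -> //|e].
    by move: (hn' r); rewrite e eqxx.
  have hinj : injective h.
    move=> r1 r2 e; apply: (@lift_inj _ k); apply: ginj.
    by rewrite !hh e.
  by rewrite (Mrow g k h hh); apply: IH.
have others : forall (g : 'I_l.+1 -> 'I_m.+1) k0, g k0 = ord0 ->
    \det (rowsub g Q) = Q ord0 ord0 * ((-1) ^+ k0 * \det (M g k0)).
  move=> g k0 hk0; rewrite -detP detPexp (bigD1 k0) //= big1 ?addr0 ?hk0 //.
  move=> k hk; case: (unliftP k k0) => [r e|e]; last by rewrite e eqxx in hk.
  by rewrite (Mzero g k r) ?mulr0 // -e.
have Dw : \det (rowsub (widen_ord hlm) Q) = q * \det (rowsub (widen_ord hlm') Q').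
  rewrite (others _ ord0 w0) expr0 mul1r (Mrow _ _ (widen_ord hlm')) //.
  by move=> r; apply: val_inj.
rewrite Dw.
case: (boolP [exists k, f k == ord0]).
  case/existsP => k0 /eqP hk0.
  rewrite (others _ _ hk0) normrM (gtr0_norm qgt0) normrM normrX normrN1 expr1n mul1r.
  apply: ler_wpM2l; [exact: ltW | exact: bound].
move=> hn.
have hn' : forall k, f k != ord0.
  by move=> k; apply: contra hn => /eqP h; apply/existsP; exists k; rewrite h.
rewrite -detP detPexp.
apply: le_trans (ler_norm_sum _ _ _) _.
have step : \sum_k `|Q (f k) ord0 * ((-1) ^+ k * \det (M f k))|
    <= \sum_k `|Q (f k) ord0| * \det (rowsub (widen_ord hlm') Q').
  apply: ler_sum => k _; rewrite normrM normrM normrX normrN1 expr1n mul1r.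
  apply: ler_wpM2l; [exact: normr_ge0 | exact: bound].
apply: le_trans step _.
rewrite -mulr_suml; apply: (ler_wpM2r D0); apply: ltW; apply: le_lt_trans hq.
pose G (i : 'I_m.+1) := if i != ord0 then `|Q i ord0| else 0.
have -> : \sum_(i < m.+1 | i != ord0) `|Q i ord0| = \sum_i G i by rewrite big_mkcond.
have -> : \sum_k `|Q (f k) ord0| = \sum_k G (f k).
  by apply: eq_bigr => k _; rewrite /G hn'.
apply: sum_inj_le => // i; rewrite /G; case: ifP => _ //.
Qed.

Theorem lemma2p2 (R : realFieldType) (m l : nat) (hl : (1 <= l)%N) (hlm : (l < m)%N)
  (Q : 'M[R]_(m, l))
  (hdom : forall j : 'I_l,
     \sum_(i < m | (i : nat) != (j : nat)) `|Q i j| < Q (widen_ord (ltnW hlm) j) j) :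
  (row_selection (widen_ord (ltnW hlm))
   /\ first_rows (ltnW hlm) Q = submx_rows Q (widen_ord (ltnW hlm)))
  /\ `|\det (first_rows (ltnW hlm) Q)| = \det (first_rows (ltnW hlm) Q)
  /\ (forall f : 'I_l -> 'I_m, row_selection f ->
        `|\det (submx_rows Q f)| <= \det (first_rows (ltnW hlm) Q)).
Proof.
have hdom' : forall j : 'I_l, \sum_(i < m | i != widen_ord (ltnW hlm) j) `|Q i j|
    < Q (widen_ord (ltnW hlm) j) j.
  by move=> j; move: (hdom j); congr (_ < _); apply: eq_bigl.
have winj : injective (widen_ord (ltnW hlm)).
  by move=> a b /(congr1 val) e; exact: val_inj.
have C := @core R l m (ltnW hlm) Q hdom'.
split; first by split => // i j.
split.
  apply: ger0_norm; apply: le_trans (normr_ge0 _) (C _ winj).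
move=> f hf; apply: C => a b e; apply/eqP; apply/negPn/negP => hab.
case: (ltngtP a b) => h.
- by move: (hf _ _ h); rewrite e ltnn.
- by move: (hf _ _ h); rewrite e ltnn.
- by move: hab; apply/negP/negPn; apply/eqP; apply: val_inj.
Qed.
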